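(* Let $1\le k\le n-2$, let $X[k]$, $V_1$, $\overline{V_1}$ be as described below, and let $\mathcal{G}$ be the graph with vertex set $\overline{V_1}$ in which distinct $u,v$ are adjacent iff some $w\in V_1$ is adjacent in $X[k]$ to both $u$ and $v$. Then $\mathcal{G}$ is isomorphic to the partial permutation graph $P(k,n-1)$; moreover, for each $w\in V_1$, the neighbors of $w$ in $\overline{V_1}$ form a maximal clique of $\mathcal{G}$ of size $n-k$.
   Context: $T_n=\{(1\,2),\dots,(1\,n)\}$. $X[k]$ is the multigraph whose vertices are the $k$-tuples of pairwise distinct elements of $[n]$, with, for each vertex $(i_1,\dots,i_k)$ and each $t\in T_n$, an edge joining it to $(t(i_1),\dots,t(i_k))$ (a loop if equal). $V_1$ is the set of vertices having $1$ as an entry, $\overline{V_1}$ the rest. For integers $1\le d\le m$, the partial permutation graph $P(d,m)$ has as vertices all $d$-tuples with pairwise distinct entries from $[m]$ (here identified with $\{2,\dots,n\}$ when $m=n-1$), two adjacent iff they differ in exactly one coordinate. *)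

(* Defs.v *)
From HB Require Import structures.
From mathcomp Require Import all_boot.
Set Implicit Arguments. Unset Strict Implicit. Unset Printing Implicit Defensive.

(* Convention: [n] = {1,...,n} is represented by 'I_n = {0,...,n-1}, the
   element i+1 of [n] being represented by i.  In particular the distinguished
   element 1 of [n] is represented by 0. *)

(* Vertices of X[k] (and of partial permutation graphs): k-tuples of pairwise
   distinct elements of 'I_n. *)
Definition Vtx (n k : nat) := {t : k.-tuple 'I_n | uniq t}.

(* the transposition (1 (i+1)) acting on 0-indexed values *)
Definition tr1 (i x : nat) : nat := if x == 0 then i else if x == i then 0 else x.

(* u --- w is an edge of X[k]: w = t(u) for some t = (1 j) in T_n, j = 2..n
   (0-indexed: i = j-1 ranging over 1..n-1). *)
Definition Xadj (n k : nat) (u w : Vtx n k) : bool :=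
  [exists i : 'I_n, (0 < val i) &&
     (map (tr1 (val i)) (map val (val (val u))) == map val (val (val w)))].

Definition V1 (n k : nat) : {set Vtx n k} :=
  [set u : Vtx n k | 0 \in map val (val (val u))].

Definition V1bar (n k : nat) := {u : Vtx n k | u \notin V1 n k}.

Definition Gadj (n k : nat) (u v : V1bar n k) : bool :=
  (u != v) &&
  [exists w : Vtx n k, [&& w \in V1 n k, Xadj w (val u) & Xadj w (val v)]].

Definition Padj (d m : nat) (s t : Vtx m d) : bool :=
  #|[set j : 'I_d | tnth (val s) j != tnth (val t) j]| == 1.

Definition is_clique (T : finType) (adj : rel T) (S : {set T}) : Prop :=
  forall x y, x \in S -> y \in S -> x != y -> adj x y.

Definition is_maximal_clique (T : finType) (adj : rel T) (S : {set T}) : Prop :=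
  is_clique adj S /\
  forall S' : {set T}, is_clique adj S' -> S \subset S' -> S' = S.

Definition graph_iso (T1 T2 : finType) (adj1 : rel T1) (adj2 : rel T2) : Prop :=
  exists f : T1 -> T2, bijective f /\ forall x y, adj1 x y = adj2 (f x) (f y).

(* Main.v *)
Require Import Defs.
From HB Require Import structures.
From mathcomp Require Import all_boot.
From mathcomp Require Import zify.
Set Implicit Arguments. Unset Strict Implicit. Unset Printing Implicit Defensive.

Definition tn n k (u : Vtx n k) (j : 'I_k) : 'I_n := tnth (val u) j.

Lemma tn_inj n k (u : Vtx n k) : injective (tn u).
Proof. exact/tuple_uniqP/(valP u). Qed.

Lemma Vtx_eq n k (u v : Vtx n k) : (forall j, tn u j = tn v j) -> u = v.
Proof. by move=> h; apply/val_inj/eq_from_tnth. Qed.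

Lemma mkV_uniq n k (F : 'I_k -> 'I_n) (H : injective F) : uniq [tuple F i | i < k].
Proof. by rewrite map_inj_uniq ?enum_uniq. Qed.

Definition mkV n k (F : 'I_k -> 'I_n) (H : injective F) : Vtx n k :=
  exist (fun t : k.-tuple 'I_n => uniq t) [tuple F i | i < k] (mkV_uniq H).

Lemma tn_mkV n k (F : 'I_k -> 'I_n) (H : injective F) j : tn (mkV H) j = F j.
Proof. by rewrite /tn /= tnth_mktuple. Qed.

Lemma V1E n k (u : Vtx n k) : (u \in V1 n k) = [exists j, val (tn u j) == 0].
Proof.
rewrite inE; apply/mapP/existsP => [[x /tnthP [j ->] /= x0]|[j /eqP h]].
  by exists j; rewrite -x0.
by exists (tn u j) => //; apply/tnthP; exists j.
Qed.

Lemma map_eq_tnth k (T U : eqType) (f g : T -> U) (t s : k.-tuple T) :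
  (map f t == map g s) = [forall j, f (tnth t j) == g (tnth s j)].
Proof.
change (map_tuple f t == map_tuple g s) with (map f t == map g s).
apply/eqP/forallP => [e j|e].
  have e' : map_tuple f t = map_tuple g s by apply: val_inj.
  by have := congr1 (fun x => tnth x j) e'; rewrite !tnth_map => ->.
have e' : map_tuple f t = map_tuple g s.
  by apply/eq_from_tnth => j; rewrite !tnth_map; apply/eqP.
by rewrite -[map f t]/(val (map_tuple f t)) e'.
Qed.

Lemma XadjE n k (w u : Vtx n k) : Xadj w u =
  [exists i : 'I_n, (0 < val i) && [forall j, tr1 (val i) (tn w j) == tn u j]].
Proof.
apply: eq_existsb => i; rewrite -map_comp.
by rewrite (map_eq_tnth (fun x : 'I_n => tr1 (val i) (val x)) val).
Qed.
Lemma notV1 n k (u : Vtx n k) : u \notin V1 n k -> forall j, val (tn u j) != 0.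
Proof. by rewrite V1E negb_exists => /forallP. Qed.

Lemma XadjA n k (w u : Vtx n k) : w \in V1 n k -> u \notin V1 n k ->
  Xadj w u = [exists j, (val (tn w j) == 0) && [forall p, (p != j) ==> (tn w p == tn u p)]].
Proof.
move=> wV uV; have u0 := notV1 uV; rewrite XadjE.
apply/existsP/existsP => [[i /andP [i0 /forallP e]]|[j /andP [/eqP wj /forallP e]]].
  move: wV; rewrite V1E => /existsP [j /eqP wj]; exists j; rewrite wj eqxx /=.
  apply/forallP => p; apply/implyP => pj.
  have wp0 : val (tn w p) != 0.
    by rewrite -wj; apply/eqP => h; move: (tn_inj (val_inj h)) pj => ->; rewrite eqxx.
  have := eqP (e p); rewrite /tr1 (negbTE wp0).
  case: eqP => [_ h|_ h]; first by move: (u0 p); rewrite /= -h eqxx.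
  by apply/eqP/val_inj.
exists (tn u j); rewrite lt0n u0 /=; apply/forallP => q.
case: (eqVneq q j) => [->|qj]; first by rewrite /tr1 wj eqxx.
have := e q; rewrite qj /= => /eqP ->.
rewrite /tr1 (negbTE (u0 q)).
have hq : val (tn u q) != val (tn u j).
  by apply/eqP => h; move: qj; rewrite (tn_inj (val_inj h)) eqxx.
by rewrite (negbTE hq).
Qed.
Definition agree n k (u v : Vtx n k) j := [forall p, (p != j) ==> (tn u p == tn v p)].

Definition repl n k (u : Vtx n k) (j : 'I_k) (x : 'I_n) (p : 'I_k) : 'I_n :=
  if p == j then x else tn u p.

Lemma repl_inj n k (u : Vtx n k) j x :
  (forall p, p != j -> tn u p != x) -> injective (repl u j x).
Proof.
move=> hx p q; rewrite /repl.
case: (eqVneq p j) => [->|pj]; case: (eqVneq q j) => [->|qj] //.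
- by move=> e; have := hx q qj; rewrite e eqxx.
- by move=> e; have := hx p pj; rewrite e eqxx.
- exact: tn_inj.
Qed.

Lemma GadjE n k (hn : 0 < n) (u v : V1bar n k) :
  Gadj u v = (u != v) && [exists j, agree (val u) (val v) j].
Proof.
rewrite /Gadj; congr andb.
have u0 := notV1 (valP u).
apply/existsP/existsP => [[w /and3P [wV a1 a2]]|[j /forallP a]].
  move: a1 a2; rewrite !XadjA ?(valP u) ?(valP v) //.
  move=> /existsP [j1 /andP [/eqP w1 /forallP e1]] /existsP [j2 /andP [/eqP w2 /forallP e2]].
  have ej : j1 = j2 by apply: (@tn_inj _ _ w); apply: val_inj; rewrite w1 w2.
  subst j2; exists j1; apply/forallP => p; apply/implyP => pj.
  by have := implyP (e1 p) pj; have := implyP (e2 p) pj; move=> /eqP <- /eqP ->.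
have hx : forall p, p != j -> tn (val u) p != Ordinal hn.
  by move=> p _; apply/eqP => e; have := u0 p; rewrite e.
have wV : mkV (repl_inj hx) \in V1 n k.
  by rewrite V1E; apply/existsP; exists j; rewrite tn_mkV /repl eqxx.
exists (mkV (repl_inj hx)); rewrite wV !XadjA ?(valP u) ?(valP v) //=.
apply/andP; split; apply/existsP; exists j; rewrite tn_mkV /repl eqxx /=;
  apply/forallP => p; rewrite tn_mkV /repl; case: eqVneq => //= pj.
exact: (implyP (a p) pj).
Qed.
Definition oshift m (h : 0 < m) (x : nat) : 'I_m := insubd (Ordinal h) x.

Lemma val_oshift m (h : 0 < m) x : x < m -> val (oshift h x) = x.
Proof. by move=> xm; rewrite /oshift val_insubd xm. Qed.

Lemma ar1 (x m : nat) : x < m -> x != 0 -> x.-1 < m - 1. Proof. lia. Qed.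
Lemma ar2 (x y : nat) : x != 0 -> y != 0 -> x.-1 = y.-1 -> x = y. Proof. lia. Qed.
Lemma ar3 (x m : nat) : x < m - 1 -> x.+1 < m. Proof. lia. Qed.

Lemma downv n k (h1 : 0 < n - 1) (u : V1bar n k) p :
  val (oshift h1 (val (tn (val u) p)).-1) = (val (tn (val u) p)).-1.
Proof. by rewrite val_oshift //; apply: ar1 (ltn_ord _) (notV1 (valP u) p). Qed.

Lemma upv n k (h : 0 < n) (v : Vtx (n - 1) k) p :
  val (oshift h (val (tn v p)).+1) = (val (tn v p)).+1.
Proof. by rewrite val_oshift //; apply: ar3 (ltn_ord _). Qed.

Lemma down_inj n k (h1 : 0 < n - 1) (u : V1bar n k) :
  injective (fun p => oshift h1 (val (tn (val u) p)).-1).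
Proof.
move=> p q /(congr1 val); rewrite !downv => e.
apply: tn_inj; apply: val_inj; apply: ar2 e; exact: notV1 (valP u) _.
Qed.

Definition down n k (h1 : 0 < n - 1) (u : V1bar n k) : Vtx (n - 1) k := mkV (@down_inj n k h1 u).

Lemma up_inj n k (h : 0 < n) (v : Vtx (n - 1) k) :
  injective (fun p => oshift h (val (tn v p)).+1).
Proof.
move=> p q /(congr1 val); rewrite !upv => e.
by apply: (@tn_inj _ _ v); apply: val_inj; apply: succn_inj.
Qed.

Lemma up_notV1 n k (h : 0 < n) (v : Vtx (n - 1) k) : mkV (@up_inj n k h v) \notin V1 n k.
Proof.
by rewrite V1E negb_exists; apply/forallP => p; rewrite tn_mkV upv.
Qed.

Definition up n k (h : 0 < n) (v : Vtx (n - 1) k) : V1bar n k :=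
  exist (fun u => u \notin V1 n k) (mkV (@up_inj n k h v)) (up_notV1 h v).

Lemma card1_agree n k (u v : Vtx n k) :
  (#|[set j | tn u j != tn v j]| == 1) = (u != v) && [exists j, agree u v j].
Proof.
apply/idP/idP.
  case/cards1P => j hD; apply/andP; split.
    apply/eqP => e; have : j \in [set j | tn u j != tn v j] by rewrite hD set11.
    by rewrite inE e eqxx.
  apply/existsP; exists j; apply/forallP => p; apply/implyP => pj.
  have : p \notin [set j | tn u j != tn v j] by rewrite hD in_set1.
  by rewrite inE negbK.
case/andP => neq /existsP [j /forallP a]; apply/cards1P; exists j.
apply/setP => p; rewrite !inE; case: (eqVneq p j) => [->|pj].
  apply: contra neq => /eqP e; apply/eqP/Vtx_eq => q.
  case: (eqVneq q j) => [->//|qj]; exact/eqP/(implyP (a q) qj).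
by rewrite (implyP (a p) pj).
Qed.

Lemma part1 n k (hn : 2 < n) : graph_iso (@Gadj n k) (@Padj k (n - 1)).
Proof.
have h1 : 0 < n - 1 by lia.
have h : 0 < n by lia.
exists (down h1 (k:=k)); split.
  exists (up (k:=k) h).
    move=> u; apply: val_inj; apply: Vtx_eq => j; rewrite /= !tn_mkV.
    apply: val_inj; rewrite val_oshift; last by apply: ar3; apply: ltn_ord.
    by rewrite downv prednK // lt0n (notV1 (valP u)).
  move=> v; apply: Vtx_eq => j; rewrite /= !tn_mkV.
  apply: val_inj; rewrite val_oshift; last first.
    by apply: ar1; [apply: ltn_ord | rewrite upv].
  by rewrite upv.
move=> x y; rewrite GadjE // /Padj.
have -> : [set j | tnth (val (down h1 x)) j != tnth (val (down h1 y)) j] =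
          [set j | tn (val x) j != tn (val y) j].
  apply/setP => j; rewrite !inE; congr negb.
  rewrite -!/(tn _ j) !tn_mkV; apply/eqP/eqP => [e|->//].
  apply: val_inj; have := congr1 val e; rewrite !downv.
  move=> e2; apply: ar2 e2; [exact: notV1 (valP x) _ | exact: notV1 (valP y) _].
by rewrite card1_agree (inj_eq val_inj).
Qed.
Lemma agreeP n k (u v : Vtx n k) j p : agree u v j -> p != j -> tn u p = tn v p.
Proof. by move=> /forallP a pj; apply/eqP; exact: (implyP (a p) pj). Qed.

Lemma part2 n k (hn : 0 < n) (hk1 : 1 <= k) (hkn : k <= n - 2) (w : Vtx n k) : w \in V1 n k ->
    let N := [set u : V1bar n k | Xadj w (val u)] in
    is_maximal_clique (@Gadj n k) N /\ #|N| = n - k.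
Proof.
move=> wV N.
have [j0 /eqP wj0] := existsP (eqbLR (V1E w) wV).
have NE : forall u : V1bar n k, (u \in N) = agree w (val u) j0.
  move=> u; rewrite inE XadjA ?(valP u) //; apply/existsP/idP => [[j /andP [/eqP wj a]]|a].
    have ej : j = j0 by apply: (@tn_inj _ _ w); apply: val_inj; rewrite wj wj0.
    by rewrite -ej.
  by exists j0; rewrite wj0 eqxx.
have eqN : forall a b : V1bar n k, a \in N -> b \in N -> tn (val a) j0 = tn (val b) j0 -> a = b.
  move=> a b; rewrite !NE => aN bN e; apply: val_inj; apply: Vtx_eq => q.
  case: (eqVneq q j0) => [->//|qj]; by rewrite -(agreeP aN qj) (agreeP bN qj).
have wne0 : forall p, p != j0 -> val (tn w p) != 0.
  move=> p pj; apply: contra pj => /eqP e; apply/eqP/(@tn_inj _ _ w)/val_inj.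
  by rewrite e wj0.
have cardN : #|N| = n - k.
  rewrite -(card_in_imset (f := fun u : V1bar n k => tn (val u) j0)); last first.
    by move=> a b aN bN; apply: eqN.
  have -> : [set tn (val u) j0 | u in N] = [set x | x \notin val (val w)].
    apply/setP => x; rewrite inE; apply/imsetP/idP => [[u uN ->]|xw].
      apply/tnthP => -[p e]; case: (eqVneq p j0) => [pj|pj].
        by have := notV1 (valP u) j0; rewrite e pj /tn wj0.
      move: e; rewrite -[tnth _ p]/(tn w p) (agreeP (eqbLR (NE u) uN) pj).
      by move/tn_inj => e; rewrite e eqxx in pj.
    have hx : forall p, p != j0 -> tn w p != x.
      by move=> p _; apply: contra xw => /eqP <-; apply/tnthP; exists p.
    have uV : mkV (repl_inj hx) \notin V1 n k.
      rewrite V1E negb_exists; apply/forallP => p; rewrite tn_mkV /repl.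
      case: (eqVneq p j0) => [_|pj]; last exact: wne0.
      apply: contra xw => /eqP x0; apply/tnthP; exists j0.
      by apply: val_inj; rewrite x0 -wj0.
    exists (exist (fun u : Vtx n k => u \notin V1 n k) _ uV); last by rewrite /= tn_mkV /repl eqxx.
    rewrite NE; apply/forallP => p; apply/implyP => pj.
    by rewrite /= tn_mkV /repl (negbTE pj).
  have := cardC (mem (val (val w))); rewrite card_ord.
  rewrite (card_uniqP (valP w)) size_tuple => e.
  have -> : #|[set x | x \notin val (val w)]| = #|[predC val (val w)]|.
    by apply: eq_card => x; rewrite !inE.
  move: e; set c := #|_|; move=> e.
  lia.
have clq : is_clique (@Gadj n k) N.
  move=> x y xN yN xy; rewrite GadjE // xy /=; apply/existsP; exists j0.
  apply/forallP => p; apply/implyP => pj.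
  by rewrite -(agreeP (eqbLR (NE x) xN) pj) (agreeP (eqbLR (NE y) yN) pj).
split => //; split => // S' cS' sub.
apply/eqP; rewrite eqEsubset andbC sub /=; apply/subsetP => x xS.
apply: contraT => xN.
have : 1 < #|N| by rewrite cardN; lia.
case/card_gt1P => a [b [aN bN ab]].
have aS := subsetP sub a aN; have bS := subsetP sub b bN.
have xa : x != a by apply: contraNneq xN => ->.
have xb : x != b by apply: contraNneq xN => ->.
move: (cS' x a xS aS xa) (cS' x b xS bS xb); rewrite !GadjE //.
case/andP => _ /existsP [j1 a1]; case/andP => _ /existsP [j2 a2].
move: xN; rewrite NE negb_forall => /existsP [p]; rewrite negb_imply => /andP [pj0 wx].
have e1 : j1 = p.
  apply/eqP; apply: contraR wx; rewrite eq_sym => pj1.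
  by rewrite (agreeP (eqbLR (NE a) aN) pj0) (agreeP a1 (pj1 : p != j1)).
have e2 : j2 = p.
  apply/eqP; apply: contraR wx; rewrite eq_sym => pj2.
  by rewrite (agreeP (eqbLR (NE b) bN) pj0) (agreeP a2 (pj2 : p != j2)).
subst j1 j2; case/negP: ab; apply/eqP; apply: eqN => //.
have j0p : j0 != p by rewrite eq_sym.
by rewrite -(agreeP a1 j0p) (agreeP a2 j0p).
Qed.

Theorem mainTheorem9 (n k : nat) (hk1 : 1 <= k) (hkn : k <= n - 2) :
  graph_iso (@Gadj n k) (@Padj k (n - 1)) /\
  forall w : Vtx n k, w \in V1 n k ->
    let N := [set u : V1bar n k | Xadj w (val u)] in
    is_maximal_clique (@Gadj n k) N /\ #|N| = n - k.
Proof.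
have hn : 2 < n by lia.
split; first exact: part1.
move=> w wV; apply: part2 => //; lia.
Qed.
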